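(* Let $p$ be a prime number and let $x,y,z\in\mathbb{N}$ with $x\le y\le z$ satisfy $\frac{4}{p}=\frac{1}{x}+\frac{1}{y}+\frac{1}{z}$. Then $\gcd(x,p)=1$.
   Context: $\mathbb{N}$ denotes the positive integers. *)

(* Defs.v *)
From mathcomp Require Import all_boot all_order all_algebra.

(* Main.v *)
Require Import Defs.
From mathcomp Require Import all_boot all_order all_algebra.
From mathcomp Require Import ring lra zify.
Import GRing.Theory Num.Theory.

Theorem lemma2 (p x y z : nat) :
  prime p -> 0 < x -> 0 < y -> 0 < z -> x <= y -> y <= z ->
  ((4%:R / p%:R : rat) = 1 / x%:R + 1 / y%:R + 1 / z%:R)%R ->
  gcdn x p = 1.
Proof.
move=> pp x0 y0 z0 xy yz H.
have p0 : 0 < p by apply: prime_gt0.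
have Hr : ((4 * x * y * z)%:R : rat)%R = ((p * (y * z + x * z + x * y))%:R)%R.
  rewrite !(natrM, natrD).
  have pn : (p%:R : rat)%R != 0%R by rewrite pnatr_eq0 -lt0n.
  have xn : (x%:R : rat)%R != 0%R by rewrite pnatr_eq0 -lt0n.
  have yn : (y%:R : rat)%R != 0%R by rewrite pnatr_eq0 -lt0n.
  have zn : (z%:R : rat)%R != 0%R by rewrite pnatr_eq0 -lt0n.
  transitivity ((4%:R / p%:R * (p%:R * x%:R * y%:R * z%:R) : rat)%R).
    by field; exact: pn.
  transitivity (((1 / x%:R + 1 / y%:R + 1 / z%:R) * (p%:R * x%:R * y%:R * z%:R) : rat)%R).
    by congr (_ * _)%R; exact: H.
  field; rewrite ?pn ?xn ?yn ?zn //.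
move/eqP: Hr; rewrite eqr_nat => /eqP Hn.
have h1 : x * z <= y * z by apply: leq_mul.
have h2 : x * y <= y * z by rewrite [y * z]mulnC; apply: leq_mul => //; apply: leq_trans yz.
have h3 : 4 * x * (y * z) <= 3 * p * (y * z).
  have : 4 * x * y * z <= p * (3 * (y * z)) by rewrite Hn; apply: leq_mul => //; lia.
  by rewrite !mulnA; lia.
have yz0 : 0 < y * z by rewrite muln_gt0 y0.
have h4 : 4 * x <= 3 * p by rewrite -(leq_pmul2r yz0).
apply/eqP; rewrite -/(coprime x p) coprime_sym prime_coprime //.
apply/negP => /(dvdn_leq x0); lia.
Qed.
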